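(* Let $n>2$, $1\le k<n$, $X\in\mathfrak{X}_0$, $(R,r)$ a hypothesis, and let $(\kappa,M,p)$ satisfy Assumption (A). For $y$ such that $\hat A^{(p)}(y)$ is defined and $I_k-\sum_{l=1}^p\hat A_l(y)$ is invertible put $B_p(y)=R(X'X)^{-1}(I_k-\sum_{l=1}^p\hat A_l(y))^{-1}\hat Z(y)$. Then: 1. $\hat\Omega_{\kappa,M,p,X}(y)$ is nonnegative definite if and only if $y\notin N(\hat\Omega_{\kappa,M,p,X})$. 2. $\hat\Omega_{\kappa,M,p,X}(y)$ is singular if and only if $y\notin N(\hat\Omega_{\kappa,M,p,X})$ and $\operatorname{rank}(B_p(y))<q$. 3. $\hat\Omega_{\kappa,M,p,X}(y)=0$ if and only if $y\notin N(\hat\Omega_{\kappa,M,p,X})$ and $B_p(y)=0$. 4. $\hat\Omega_{\kappa,M,p,X}(y)$ is positive definite if $y\notin N(\hat\Omega_{\kappa,M,p,X})$ and $\operatorname{rank}(\hat Z(y))=k$. 5. There is a multivariate polynomial $g^*_{\kappa,M,p}:\mathbb{R}^n\times\mathbb{R}^{n\times k}\times\mathbb{R}^{q\times k}\to\mathbb{R}$, not depending on $r$, such that for all $X\in\mathfrak{X}_0$ and $R$ of rank $q$, $N^*(\hat\Omega_{\kappa,M,p,X})=\{y\in\mathbb{R}^n:g^*_{\kappa,M,p}(y,X,R)=0\}$; in particular $N^*(\hat\Omega_{\kappa,M,p,X})$ is an algebraic set.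
   Context: Let $n>2$ and $1\le k<n$ be integers and $\mathfrak{X}_0=\{X\in\mathbb{R}^{n\times k}:\operatorname{rank}(X)=k\}$. For $X\in\mathfrak{X}_0$, $y\in\mathbb{R}^n$: $\hat\beta_X(y)=(X'X)^{-1}X'y$, $\hat u_X(y)=y-X\hat\beta_X(y)$. A hypothesis is $(R,r)$ with $R\in\mathbb{R}^{q\times k}$, $\operatorname{rank}(R)=q\ge1$, $r\in\mathbb{R}^q$. Construction of $\hat\Omega_{\kappa,M,p,X}$ at $y$: $\hat V(y)=X'\operatorname{diag}(\hat u_X(y))\in\mathbb{R}^{k\times n}$ with columns $\hat V_{\cdot j}(y)$; $\hat V_p(y)=(\hat V_{\cdot(p+1)}(y),\dots,\hat V_{\cdot n}(y))$; $\hat V_1(y)\in\mathbb{R}^{kp\times(n-p)}$ has $j$-th column $(\hat V_{\cdot(j+p-1)}(y)',\dots,\hat V_{\cdot j}(y)')'$. If $\hat V_1\hat V_1'$ is invertible, $\hat A^{(p)}(y)=(\hat A_1(y),\dots,\hat A_p(y))=\hat V_p\hat V_1'(\hat V_1\hat V_1')^{-1}$ and $\hat Z(y)=\hat V_p(y)-\hat A^{(p)}(y)\hat V_1(y)\in\mathbb{R}^{k\times(n-p)}$. $\check\Gamma_i(y)=(n-p)^{-1}\sum_{j=i+1}^{n-p}\hat Z_{\cdot j}\hat Z_{\cdot(j-i)}'$ for $0\le i\le n-p-1$, $\check\Gamma_{-i}=\check\Gamma_i'$, $\check\Psi(y)=\sum_{|i|\le n-p-1}\kappa(i/M(y))\check\Gamma_i(y)$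 (if $M(y)=0$, the weight is $1$ for $i=0$ and $0$ otherwise). If $I_k-\sum_l\hat A_l(y)$ is invertible, with $F$ its inverse, $\hat\Psi(y)=F\check\Psi(y)F'$ and $\hat\Omega_{\kappa,M,p,X}(y)=nR(X'X)^{-1}\hat\Psi(y)(X'X)^{-1}R'$. It is undefined at $y$ if $\hat V_1\hat V_1'$ is singular, $I_k-\sum_l\hat A_l(y)$ is singular, or $M(y)$ is undefined. $N(\hat\Omega)$: set of $y$ where $\hat\Omega$ is undefined; $N^*(\hat\Omega)$: set of $y$ where $\hat\Omega(y)$ is undefined or singular. Bandwidths (undefined whenever $\hat Z(y)$ is undefined or a denominator vanishes; tuning constants independent of $y$ and $X$; a weights vector is $\omega\in\mathbb{R}^k\setminus\{0\}$ with nonnegative entries). $\mathbb{M}_{AM}$: $\hat\rho_i=\sum_{j=2}^{n-p}\hat Z_{ij}\hat Z_{i(j-1)}/\sum_{j=1}^{n-p-1}\hat Z_{ij}^2$, $\hat\sigma_i^2=(n-p-1)^{-1}\sum_{j=2}^{n-p}(\hat Z_{ij}-\hat\rho_i\hat Z_{i(j-1)})^2$, $\hat\alpha_1=\sum_i\omega_i\frac{4\hat\rho_i^2\hat\sigma_i^4}{(1-\hat\rho_i)^6(1+\hat\rho_i)^2}/\sum_i\omega_i\frac{\hat\sigma_i^4}{(1-\hat\rho_i)^4}$, $\hat\alpha_2=\sum_i\omega_i\frac{4\hat\rho_i^2\hat\sigma_i^4}{(1-\hat\rho_i)^8}/\sum_i\omega_i\frac{\hat\sigma_i^4}{(1-\hat\rho_i)^4}$,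 $M(y)=c_1(\hat\alpha_j(y)n)^{c_2}$, $c_1,c_2>0$, $j\in\{1,2\}$. $\mathbb{M}_{NW}$: $w(i)\ge0$ for $|i|\le n-p-1$, $w(0)=1$, $\bar\sigma_i=\omega'\check\Gamma_{|i|}\omega$, $M(y)=\bar c_2([\sum_i|i|^{\bar c_1}w(i)\bar\sigma_i/\sum_iw(i)\bar\sigma_i]^2n)^{\bar c_3}$, $\bar c_1\in\mathbb{N}$, $\bar c_2,\bar c_3>0$. $\mathbb{M}_{KV}$: constants $M>0$. Assumption (A): (i) $\kappa$ even, continuous, $\kappa(0)=1$, $\kappa(x)\to0$ as $x\to\infty$, and for all $s>0$, $J\in\mathbb{N}$ the matrix $(\kappa((i-j)/s))_{i,j=1}^J$ is positive definite; (ii) $M\in\mathbb{M}_{AM}\cup\mathbb{M}_{NW}\cup\mathbb{M}_{KV}$; (iii) $p\in\mathbb{Z}$, $1\le p\le n/(k+1)$. *)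

(* Defs.v *)
From HB Require Import structures.
From mathcomp Require Import all_boot all_order all_algebra.
From mathcomp Require Import all_classical all_reals all_analysis.
From mathcomp Require mpoly.

Set Implicit Arguments.
Unset Strict Implicit.
Unset Printing Implicit Defensive.
Import Order.TTheory GRing.Theory Num.Theory.
Import numFieldNormedType.Exports.
Local Open Scope classical_set_scope.
Local Open Scope ring_scope.

Section Estimator.
Variable R : realType.

(* entry (i,j) of a matrix indexed by naturals (0-based); 0 outside range *)
Definition getm m n (A : 'M[R]_(m, n)) (i j : nat) : R :=
  match (insub i : option 'I_m), (insub j : option 'I_n) with
  | Some a, Some b => A a b
  | _, _ => 0
  end.

Definition nnd m (A : 'M[R]_m) : Prop :=
  forall v : 'cV[R]_m, 0 <= (v^T *m A *m v) 0 0.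
Definition posdef m (A : 'M[R]_m) : Prop :=
  forall v : 'cV[R]_m, v != 0 -> 0 < (v^T *m A *m v) 0 0.

Definition uhat n k (X : 'M[R]_(n, k)) (y : 'cV[R]_n) : 'cV[R]_n :=
  y - X *m (invmx (X^T *m X) *m X^T *m y).

Definition Vhat n k (X : 'M[R]_(n, k)) (y : 'cV[R]_n) : 'M[R]_(k, n) :=
  X^T *m diag_mx (uhat X y)^T.

(* V_p(y) = (V_{.(p+1)}, ..., V_{.n})  (0-based: columns p .. n-1) *)
Definition Vp n k p (X : 'M[R]_(n, k)) (y : 'cV[R]_n) : 'M[R]_(k, n - p) :=
  \matrix_(a < k, j < n - p) getm (Vhat X y) a (j + p).

(* V_1(y) : kp x (n-p); (0-based) column j is the stack of the columns
   j+p-1, j+p-2, ..., j of V(y); block l (l < p) holds column j+p-1-l. *)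
Definition V1 n k p (X : 'M[R]_(n, k)) (y : 'cV[R]_n) : 'M[R]_(p * k, n - p) :=
  \matrix_(i < p * k, j < n - p)
     getm (Vhat X y) (i %% k) (j + (p - (i %/ k).+1)).

Definition Ahat n k p (X : 'M[R]_(n, k)) (y : 'cV[R]_n)
  : option 'M[R]_(k, p * k) :=
  let S := V1 p X y *m (V1 p X y)^T in
  if S \in unitmx then Some (Vp p X y *m (V1 p X y)^T *m invmx S) else None.

Definition sumA k p (A : 'M[R]_(k, p * k)) : 'M[R]_k :=
  \sum_(l < p) \matrix_(a < k, b < k) getm A a (l * k + b).

Definition Zhat n k p (X : 'M[R]_(n, k)) (y : 'cV[R]_n)
  : option 'M[R]_(k, n - p) :=
  omap (fun A => Vp p X y - A *m V1 p X y) (Ahat p X y).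

(* Gamma-check_i for a k x m matrix Z (m = n - p), 0 <= i <= m-1:
   m^{-1} sum_{j=i+1}^{m} Z_{.j} Z_{.(j-i)}'  (1-based), written 0-based *)
Definition Gammac k m (Z : 'M[R]_(k, m)) (i : nat) : 'M[R]_k :=
  \matrix_(a < k, b < k)
     ((m%:R)^-1 * \sum_(i <= j < m) getm Z a j * getm Z b (j - i)).

Definition kw (kappa : R -> R) (M : R) (i : int) : R :=
  if M == 0 then (i == 0)%:R else kappa (i%:~R / M).

Definition symsum (m : nat) (f : int -> R) : R :=
  \sum_(i < m) (f (Posz i) + (if (0 < i)%N then f (- Posz i) else 0)).

(* Psi-check = sum_{|i| <= m-1} kappa(i/M) Gamma-check_i,
   Gamma-check_{-i} = Gamma-check_i' *)
Definition Psic (kappa : R -> R) (M : R) k m (Z : 'M[R]_(k, m)) : 'M[R]_k :=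
  \sum_(i < m) (kw kappa M (Posz i) *: Gammac Z i
     + (if (0 < i)%N then kw kappa M (- Posz i) *: (Gammac Z i)^T else 0)).

Inductive bwspec (k : nat) : Type :=
  (* AM: weights om, constants c1 c2, index j in {1,2} *)
  | BW_AM of 'cV[R]_k & R & R & nat
  (* NW: weights om, w, cbar1 cbar2 cbar3 *)
  | BW_NW of 'cV[R]_k & (int -> R) & nat & R & R
  | BW_KV of R.

Definition weightsv k (om : 'cV[R]_k) : Prop :=
  om != 0 /\ forall a, 0 <= om a 0.

Definition bw_ok k (m : nat) (bw : bwspec k) : Prop :=
  match bw with
  | BW_AM om c1 c2 j => weightsv om /\ 0 < c1 /\ 0 < c2 /\ (j = 1%N \/ j = 2%N)
  | BW_NW om w cb1 cb2 cb3 =>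
      weightsv om /\ (forall i : int, (absz i <= m.-1)%N -> 0 <= w i) /\
      w 0 = 1 /\ (0 < cb1)%N /\ 0 < cb2 /\ 0 < cb3
  | BW_KV M => 0 < M
  end.

Definition rhoh k m (Z : 'M[R]_(k, m)) (a : 'I_k) : R :=
  (\sum_(1 <= t < m) getm Z a t * getm Z a t.-1) /
  (\sum_(0 <= t < m.-1) getm Z a t ^+ 2).
Definition sig2h k m (Z : 'M[R]_(k, m)) (a : 'I_k) : R :=
  ((m.-1)%:R)^-1 * \sum_(1 <= t < m) (getm Z a t - rhoh Z a * getm Z a t.-1) ^+ 2.

Definition Mbw k (n : nat) m (bw : bwspec k) (Z : 'M[R]_(k, m)) : option R :=
  match bw with
  | BW_AM om c1 c2 j =>
      let rho := rhoh Z in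
      let s2 := sig2h Z in
      let D := \sum_a om a 0 * (s2 a ^+ 2 / (1 - rho a) ^+ 4) in
      let N1 := \sum_a om a 0 * (4 * rho a ^+ 2 * s2 a ^+ 2 /
                                ((1 - rho a) ^+ 6 * (1 + rho a) ^+ 2)) in
      let N2 := \sum_a om a 0 * (4 * rho a ^+ 2 * s2 a ^+ 2 / (1 - rho a) ^+ 8) in
      if [&& (m.-1 != 0)%N,
             [forall a : 'I_k, \sum_(0 <= t < m.-1) getm Z a t ^+ 2 != 0],
             [forall a : 'I_k, 1 - rho a != 0],
             (j == 1%N) ==> [forall a : 'I_k, 1 + rho a != 0] & D != 0]
      then Some (c1 * powR ((if j == 1%N then N1 / D else N2 / D) * n%:R) c2)
      else None
  | BW_NW om w cb1 cb2 cb3 =>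
      let sb := fun i : int => (om^T *m Gammac Z (absz i) *m om) 0 0 in
      let num := symsum m (fun i => (absz i)%:R ^+ cb1 * w i * sb i) in
      let den := symsum m (fun i => w i * sb i) in
      if den != 0 then Some (cb2 * powR ((num / den) ^+ 2 * n%:R) cb3) else None
  | BW_KV M => Some M
  end.

Definition Omegah (kappa : R -> R) k (bw : bwspec k) n q p
  (X : 'M[R]_(n, k)) (Rm : 'M[R]_(q, k)) (y : 'cV[R]_n) : option 'M[R]_q :=
  match Ahat p X y with
  | None => None
  | Some A =>
      let Z := Vp p X y - A *m V1 p X y in
      let D := (1%:M : 'M[R]_k) - sumA A in
      if D \in unitmx then
        match Mbw n bw Z with
        | None => None
        | Some M =>
            let F := invmx D in
            let XXi := invmx (X^T *m X) in
            Some (n%:R *: (Rm *m XXi *m (F *m Psic kappa M Z *m F^T)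
                              *m XXi *m Rm^T))
        end
      else None
  end.

Definition Bp n k q p (X : 'M[R]_(n, k)) (Rm : 'M[R]_(q, k)) (y : 'cV[R]_n)
  : option 'M[R]_(q, n - p) :=
  match Ahat p X y with
  | None => None
  | Some A =>
      let Z := Vp p X y - A *m V1 p X y in
      let D := (1%:M : 'M[R]_k) - sumA A in
      if D \in unitmx then Some (Rm *m invmx (X^T *m X) *m invmx D *m Z)
      else None
  end.

Definition inNstar (kappa : R -> R) k (bw : bwspec k) n q p
  (X : 'M[R]_(n, k)) (Rm : 'M[R]_(q, k)) (y : 'cV[R]_n) : Prop :=
  Omegah kappa bw p X Rm y = None \/
  exists O, Omegah kappa bw p X Rm y = Some O /\ O \notin unitmx.

Definition kernelA (kappa : R -> R) : Prop :=
  (forall x, kappa (- x) = kappa x) /\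
  continuous kappa /\
  kappa 0 = 1 /\
  (kappa x @[x --> +oo] --> 0) /\
  (forall s : R, 0 < s -> forall J : nat,
     posdef (\matrix_(i < J, j < J) kappa ((i%:R - j%:R) / s))).

Definition packv n k q (y : 'cV[R]_n) (X : 'M[R]_(n, k)) (Rm : 'M[R]_(q, k))
  : 'I_(n + n * k + q * k) -> R :=
  fun i =>
    let t := nat_of_ord i in
    if (t < n)%N then getm y t 0
    else if (t < n + n * k)%N then getm X ((t - n) %/ k) ((t - n) %% k)
    else getm Rm ((t - n - n * k) %/ k) ((t - n - n * k) %% k).

End Estimator.

(* Main.v *)
Require Import Defs.
From HB Require Import structures.
From mathcomp Require Import all_boot all_order all_algebra.
From mathcomp Require Import all_classical all_reals all_analysis.
From mathcomp Require mpoly.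
From mathcomp Require Import ring lra.
Set Implicit Arguments.
Unset Strict Implicit.
Unset Printing Implicit Defensive.
Import Order.TTheory GRing.Theory Num.Theory.
Local Open Scope classical_set_scope.
Local Open Scope ring_scope.
Canonical mpoly.mpoly_mpoly__canonical__eqtype_Equality.
Canonical mpoly.mpoly_mpoly__canonical__choice_Choice.
Canonical mpoly.mpoly_mpoly__canonical__Algebra_BaseAddMagma.
Canonical mpoly.mpoly_mpoly__canonical__Algebra_AddMagma.
Canonical mpoly.mpoly_mpoly__canonical__Algebra_AddSemigroup.
Canonical mpoly.mpoly_mpoly__canonical__Algebra_BaseAddUMagma.
Canonical mpoly.mpoly_mpoly__canonical__Algebra_AddUMagma.
Canonical mpoly.mpoly_mpoly__canonical__Algebra_ChoiceBaseAddMagma.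
Canonical mpoly.mpoly_mpoly__canonical__Algebra_ChoiceBaseAddUMagma.
Canonical mpoly.mpoly_mpoly__canonical__Algebra_Nmodule.
Canonical mpoly.mpoly_mpoly__canonical__Algebra_BaseZmodule.
Canonical mpoly.mpoly_mpoly__canonical__Algebra_Zmodule.
Canonical mpoly.mpoly_mpoly__canonical__GRing_PzSemiRing.
Canonical mpoly.mpoly_mpoly__canonical__GRing_NzSemiRing.
Canonical mpoly.mpoly_mpoly__canonical__GRing_PzRing.
Canonical mpoly.mpoly_mpoly__canonical__GRing_NzRing.
Canonical mpoly.mpoly_mpoly__canonical__GRing_ComPzSemiRing.
Canonical mpoly.mpoly_mpoly__canonical__GRing_ComNzSemiRing.
Canonical mpoly.mpoly_mpoly__canonical__GRing_ComPzRing.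

Section LA.
Variable R : realType.

Lemma getm_ord m n (A : 'M[R]_(m, n)) (i : 'I_m) (j : 'I_n) : getm A i j = A i j.
Proof. by rewrite /getm !valK. Qed.

Lemma sqnorm_ge0 m (x : 'rV[R]_m) : 0 <= (x *m x^T) 0 0.
Proof. rewrite mxE; apply: sumr_ge0 => i _; rewrite mxE; rewrite -expr2; exact: sqr_ge0. Qed.

Lemma sqnorm_eq0 m (x : 'rV[R]_m) : (x *m x^T) 0 0 = 0 -> x = 0.
Proof.
rewrite mxE => H; apply/matrixP => a b; rewrite ord1 mxE.
have G : forall j, predT j -> 0 <= x 0 j * x^T j 0.
  by move=> j _; rewrite mxE -expr2; exact: sqr_ge0.
have := @psumr_eq0P _ _ predT (fun j => x 0 j * x^T j 0) G H b isT.
by rewrite mxE => /eqP; rewrite mulf_eq0 orbb => /eqP.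
Qed.

Lemma row_freePv q m (B : 'M[R]_(q, m)) :
  row_free B <-> (forall u : 'rV_q, u *m B = 0 -> u = 0).
Proof.
split.
  by move=> fB u /eqP; rewrite mulmx_free_eq0 // => /eqP.
move=> H; apply/negPn/negP => nfB.
have: kermx B != 0.
  by rewrite -mxrank_eq0 mxrank_ker subn_eq0 -ltnNge ltn_neqAle rank_leq_row andbT.
case/matrix0Pn => i [j nz].
have := H (row i (kermx B)).
have: (row i (kermx B) *m B == 0) by rewrite -sub_kermx row_sub.
move=> /eqP E /(_ E) /rowP /(_ j) E2.
have E3 : row i (kermx B) 0 j = kermx B i j by rewrite mxE.
by move: nz; rewrite -E3 E2 mxE eqxx.
Qed.

Lemma unit_mxtr q m (B : 'M[R]_(q, m)) : (B *m B^T \in unitmx) = row_free B.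
Proof.
apply/idP/idP.
  rewrite -row_free_unit /row_free => /eqP E.
  by rewrite eqn_leq rank_leq_row /= -{1}E mxrankM_maxl.
move=> fB; rewrite -row_free_unit; apply/row_freePv => u E.
apply/(row_freePv B).1 => //; apply: sqnorm_eq0.
by rewrite trmx_mul mulmxA -(mulmxA u) E mul0mx mxE.
Qed.

Lemma unit_XtX n k (X : 'M[R]_(n, k)) : \rank X = k -> X^T *m X \in unitmx.
Proof.
move=> rX; have := unit_mxtr X^T; rewrite trmxK => ->.
by rewrite /row_free mxrank_tr rX.
Qed.
End LA.

Section PSD.
Variable R : realType.

Lemma quadB q m (c : R) (B : 'M[R]_(q,m)) (K : 'M[R]_m) (v : 'cV_q) :
  (v^T *m (c *: (B *m K *m B^T)) *m v) 0 0 = c * (((B^T *m v)^T *m K *m (B^T *m v)) 0 0).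
Proof.
by rewrite -scalemxAr -scalemxAl mxE trmx_mul trmxK !mulmxA.
Qed.

Lemma psd_core q m (c : R) (B : 'M[R]_(q,m)) (K : 'M[R]_m) :
  0 < c -> posdef K ->
  [/\ nnd (c *: (B *m K *m B^T)),
      (c *: (B *m K *m B^T) \in unitmx) = row_free B,
      (c *: (B *m K *m B^T) = 0 <-> B = 0) &
      (row_free B -> posdef (c *: (B *m K *m B^T)))].
Proof.
move=> c0 pK; set O := c *: _.
have Q0 : forall v : 'cV_q, 0 <= (v^T *m O *m v) 0 0.
  move=> v; rewrite quadB; apply: mulr_ge0; first exact: ltW.
  have [->|nz] := eqVneq (B^T *m v) 0; first by rewrite mulmx0 mxE.
  exact/ltW/pK.
have Qeq : forall v : 'cV_q, (v^T *m O *m v) 0 0 = 0 -> B^T *m v = 0.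
  move=> v; rewrite quadB => /eqP; rewrite mulf_eq0 (gt_eqF c0) /= => /eqP E.
  apply/eqP/negPn/negP => nz; have := pK _ nz; by rewrite E ltxx.
have uO : forall u : 'rV_q, (u *m O == 0) = (u *m B == 0).
  move=> u; apply/eqP/eqP => E.
    have : B^T *m u^T = 0.
      by apply: Qeq; rewrite trmxK E mul0mx mxE.
    by move/(congr1 trmx); rewrite trmx_mul !trmxK trmx0.
  by rewrite /O -scalemxAr !mulmxA E !mul0mx scaler0.
have Hunit : (O \in unitmx) = row_free B.
  rewrite -row_free_unit; apply/idP/idP.
    move=> /row_freePv H; apply/row_freePv => u /eqP E.
    by apply: H; apply/eqP; rewrite uO.
  move=> /row_freePv H; apply/row_freePv => u /eqP E.
  by apply: H; apply/eqP; rewrite -uO.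
split => //.
- split => [E|Eb]; last by rewrite /O Eb !mul0mx scaler0.
  apply/row_matrixP => i; rewrite row0 rowE; apply/eqP; rewrite -uO.
  by rewrite E mulmx0.
- move=> fB v nz.
  have nz2 : B^T *m v != 0.
    apply/negP => /eqP E; move: nz; apply/negP; rewrite negbK.
    have : v^T *m B = 0 by rewrite -[B]trmxK -trmx_mul E trmx0.
    move/(row_freePv B).1 => /(_ fB) /(congr1 trmx); rewrite trmxK trmx0 => ->.
    by [].
  by rewrite quadB; apply: mulr_gt0 => //; exact: pK.
Qed.
End PSD.

Section PSI.
Variable R : realType.

Lemma h1 (F : nat -> nat -> R) m :
  \sum_(0 <= i < m.+1) \sum_(i <= j < m.+1) F i j =
  \sum_(0 <= i < m) \sum_(i <= j < m) F i j + \sum_(0 <= i < m.+1) F i m.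
Proof.
rewrite (@eq_big_nat _ _ _ 0 m.+1 _ (fun i => \sum_(i <= j < m) F i j + F i m)); last first.
  by move=> i /andP[_ Hi]; rewrite big_nat_recr.
by rewrite big_split /= big_nat_recr //= (big_geq (leqnn m)) addr0.
Qed.

Lemma h2 (F : nat -> nat -> R) m :
  \sum_(0 <= i < m.+1) (if (0 < i)%N then \sum_(i <= j < m.+1) F i j else 0) =
  \sum_(0 <= i < m) (if (0 < i)%N then \sum_(i <= j < m) F i j else 0)
  + \sum_(0 <= i < m.+1) (if (0 < i)%N then F i m else 0).
Proof.
rewrite (@eq_big_nat _ _ _ 0 m.+1 _ (fun i =>
   (if (0 < i)%N then \sum_(i <= j < m) F i j else 0) + (if (0 < i)%N then F i m else 0))); last first.
  by move=> i /andP[_ Hi]; case: ifP => _; rewrite ?addr0 // big_nat_recr.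
rewrite big_split /= big_nat_recr //= (big_geq (leqnn m)); case: ifP => _; by rewrite addr0.
Qed.

Lemma tri_sum (G : nat -> nat -> R) m :
  \sum_(0 <= i < m) \sum_(i <= j < m) G j (j - i)%N
  + \sum_(0 <= i < m) (if (0 < i)%N then \sum_(i <= j < m) G (j - i)%N j else 0)
  = \sum_(0 <= j < m) \sum_(0 <= l < m) G j l.
Proof.
elim: m => [|m IH]; first by rewrite !big_geq // addr0.
rewrite (h1 (fun i j => G j (j - i)%N)) (h2 (fun i j => G (j - i)%N j)).
rewrite (@eq_big_nat _ _ _ 0 m.+1 (fun j => \sum_(0 <= l < m.+1) G j l)
   (fun j => \sum_(0 <= l < m) G j l + G j m)); last first.
  by move=> i _; rewrite big_nat_recr.
rewrite big_split /= [X in _ = X + _]big_nat_recr //= -IH.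
have E1 : \sum_(0 <= i < m.+1) G m (m - i)%N = \sum_(0 <= l < m.+1) G m l.
  rewrite big_nat_rev /=; apply: eq_big_nat => i /andP[_ Hi].
  by congr G; rewrite add0n subSS subKn // -ltnS.
have E2 : \sum_(0 <= i < m.+1) (if (0 < i)%N then G (m - i)%N m else 0)
          = \sum_(0 <= j < m) G j m.
  rewrite big_nat_recl //= [RHS]big_nat_rev /= add0r.
  by apply: eq_big_nat => i _; rewrite add0n.
rewrite E1 E2 [\sum_(0 <= l < m.+1) G m l]big_nat_recr //= [\sum_(0 <= i < m.+1) G i m]big_nat_recr //=.
ring.
Qed.

End PSI.

Section PSI2.
Variable R : realType.
Definition Kmx (w : int -> R) m : 'M[R]_m := \matrix_(i < m, j < m) w (i%:Z - j%:Z).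

Lemma Psic_eq kappa M k m (Z : 'M[R]_(k,m)) :
  Psic kappa M Z = (m%:R)^-1 *: (Z *m Kmx (kw kappa M) m *m Z^T).
Proof.
apply/matrixP => a b; rewrite summxE.
pose G j l := getm Z a j * kw kappa M (j%:Z - l%:Z) * getm Z b l.
have -> : (m%:R^-1 *: (Z *m Kmx (kw kappa M) m *m Z^T)) a b =
   m%:R^-1 * \sum_(0 <= j < m) \sum_(0 <= l < m) G j l.
  rewrite mxE; congr (_ * _); rewrite mxE.
  under eq_bigr do rewrite mxE big_distrl /=.
  rewrite exchange_big /= big_mkord; apply: eq_bigr => j _.
  rewrite big_mkord; apply: eq_bigr => l _.
  by rewrite !mxE /G !getm_ord.
rewrite -tri_sum mulrDr !big_mkord !big_distrr -big_split /=.
apply: eq_bigr => i _.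
rewrite mxE; congr (_ + _).
  rewrite !mxE mulrA [kw _ _ _ * _]mulrC -mulrA big_distrr; congr (_ * _).
  apply: eq_big_nat => j /andP[Hij _].
  rewrite /G subzn ?leq_subr // subKn //; match goal with |- _ ?x ?y = _ => let r := fresh in set r := (RHS); change (x * y = r); rewrite /r end; ring.
case: ifP => Hi; last by rewrite mxE mulr0.
rewrite !mxE mulrA [kw _ _ _ * _]mulrC -mulrA big_distrr; congr (_ * _).
apply: eq_big_nat => j /andP[Hij _].
have E : ((j - i)%N%:Z - j%:Z) = - (i%:Z) by rewrite -opprB subzn ?leq_subr // subKn.
by rewrite /G E; match goal with |- _ ?x ?y = _ => let r := fresh in set r := (RHS); change (x * y = r); rewrite /r end; ring.
Qed.
End PSI2.

Section OM.
Variable R : realType.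

Lemma Kmx_posdef (kappa : R -> R) M m : kernelA kappa -> 0 <= M -> posdef (Kmx (kw kappa M) m).
Proof.
move=> [_ [_ [_ [_ kpd]]]] M0.
have [->|nM] := eqVneq M 0.
  have -> : Kmx (kw kappa 0) m = 1%:M.
    apply/matrixP => i j; rewrite !mxE /kw eqxx subr_eq0.
    case: (eqVneq i j) => [->|ne]; rewrite ?eqxx //.
    have ne' : (i:nat) != j by [].
    by rewrite eqz_nat (negbTE ne').
  move=> v nz; rewrite mulmx1.
  have := sqnorm_ge0 v^T; rewrite le_eqVlt => /orP[/eqP E|]; last by rewrite trmxK.
  have := @sqnorm_eq0 R _ v^T (esym E) => /(congr1 trmx); rewrite trmxK trmx0 => E2.
  by rewrite E2 eqxx in nz.
have Mp : 0 < M by rewrite lt_def nM M0.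
have -> : Kmx (kw kappa M) m = \matrix_(i < m, j < m) kappa ((i%:R - j%:R) / M).
  by apply/matrixP => i j; rewrite !mxE /kw (negbTE nM) intrB.
exact: kpd.
Qed.

Lemma Mbw_ge0 k n m (bw : bwspec R k) (Z : 'M[R]_(k, m)) M :
  bw_ok m bw -> Mbw n bw Z = Some M -> 0 <= M.
Proof.
case: bw => [om c1 c2 j|om w cb1 cb2 cb3|M0] /=.
- move=> [_ [c1p [c2p _]]]; case: ifP => // _ [<-].
  by apply: mulr_ge0; [exact: ltW|exact: powR_ge0].
- move=> [_ [_ [_ [_ [cb2p _]]]]]; case: ifP => // _ [<-].
  by apply: mulr_ge0; [exact: ltW|exact: powR_ge0].
- by move=> M0p [<-]; exact: ltW.
Qed.

End OM.

Section OM2.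
Variable R : realType.

Lemma XXi_sym n k (X : 'M[R]_(n, k)) : (invmx (X^T *m X))^T = invmx (X^T *m X).
Proof. by rewrite trmx_inv trmx_mul trmxK. Qed.

Definition Bof n k q p (X : 'M[R]_(n, k)) (Rm : 'M[R]_(q, k)) (y : 'cV[R]_n) (A : 'M[R]_(k, p * k)) :=
  Rm *m invmx (X^T *m X) *m invmx (1%:M - sumA A) *m (Vp p X y - A *m V1 p X y).

Lemma Omegah_rep (kappa : R -> R) k (bw : bwspec R k) n q p X (Rm : 'M[R]_(q, k)) y O :
  Omegah kappa bw p X Rm y = Some O ->
  exists A M, [/\ Ahat p X y = Some A, (1%:M - sumA A) \in unitmx,
    Mbw n bw (Vp p X y - A *m V1 p X y) = Some M &
    O = (n%:R / (n - p)%:R) *: (Bof X Rm y A *m Kmx (kw kappa M) (n - p) *m (Bof X Rm y A)^T)].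
Proof.
rewrite /Omegah; case: (Ahat p X y) => // A; case: ifP => // DU.
case E: (Mbw _ _ _) => [M|] // [<-]; exists A, M; split => //.
rewrite Psic_eq /Bof !trmx_mul XXi_sym.
rewrite -!scalemxAr -!scalemxAl -?scalemxAr -?scalemxAl -?scalemxAr scalerA !mulmxA.
by rewrite mulrC.
Qed.

Lemma Omegah_Bp k n q p (X : 'M[R]_(n, k)) (Rm : 'M[R]_(q, k)) y A :
  Ahat p X y = Some A -> (1%:M - sumA A) \in unitmx -> Bp p X Rm y = Some (Bof X Rm y A).
Proof. by rewrite /Bp => -> ->. Qed.

End OM2.

Section RF.
Variables (R : realType) (N : nat) (T : Type) (pv : T -> 'I_N -> R).
Local Notation P := (mpoly.mpoly N R).
Local Notation ev t p := (mpoly.meval (pv t) p).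

Definition RF (U : T -> Prop) (f : T -> R) :=
  exists (a b : P), forall t, U t -> ev t b != 0 /\ f t = ev t a / ev t b.
Definition Zs (U : T -> Prop) (C : T -> Prop) :=
  exists g : P, forall t, U t -> (C t <-> ev t g = 0).

Lemma RF_poly U (a : P) : RF U (fun t => ev t a).
Proof.
exists a, 1 => t _; rewrite mpoly.meval1 oner_neq0 divr1; split => //.
Qed.

Lemma RF_const U c : RF U (fun _ => c).
Proof.
exists (mpoly.mpolyC N c), 1 => t _; rewrite mpoly.meval1 mpoly.mevalC divr1; split => //.
Qed.

Lemma RF_ext U f g : (forall t, U t -> f t = g t) -> RF U g -> RF U f.
Proof. move=> E [a [b H]]; exists a, b => t Ut; rewrite E //; exact: H. Qed.

Lemma RF_sub U V f : (forall t, V t -> U t) -> RF U f -> RF V f.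
Proof. move=> S [a [b H]]; exists a, b => t Vt; exact/H/S. Qed.

Lemma RF_add U f g : RF U f -> RF U g -> RF U (fun t => f t + g t).
Proof.
move=> [a [b H]] [c [d K]]; exists (a * d + c * b), (b * d) => t Ut.
have [nb ->] := H t Ut; have [nd ->] := K t Ut.
rewrite mpoly.mevalM mpoly.mevalD !mpoly.mevalM; split; first by rewrite mulf_neq0.
by field; rewrite nb nd.
Qed.

Lemma RF_mul U f g : RF U f -> RF U g -> RF U (fun t => f t * g t).
Proof.
move=> [a [b H]] [c [d K]]; exists (a * c), (b * d) => t Ut.
have [nb ->] := H t Ut; have [nd ->] := K t Ut.
rewrite !mpoly.mevalM; split; first by rewrite mulf_neq0.
by field; rewrite nb nd.
Qed.

Lemma RF_opp U f : RF U f -> RF U (fun t => - f t).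
Proof.
move=> [a [b H]]; exists (- a), b => t Ut.
have [nb ->] := H t Ut; rewrite mpoly.mevalN; split => //; by rewrite mulNr.
Qed.

Lemma RF_subr U f g : RF U f -> RF U g -> RF U (fun t => f t - g t).
Proof. by move=> Hf Hg; apply: RF_add => //; apply: RF_opp. Qed.

Lemma RF_inv U f : RF U f -> (forall t, U t -> f t != 0) -> RF U (fun t => (f t)^-1).
Proof.
move=> [a [b H]] nz; exists b, a => t Ut.
have [nb E] := H t Ut; have := nz t Ut; rewrite E => nf.
have na : ev t a != 0 by apply: contraNneq nf => ->; rewrite mul0r.
by split => //; rewrite invf_div.
Qed.

Lemma RF_div U f g : RF U f -> RF U g -> (forall t, U t -> g t != 0) ->
  RF U (fun t => f t / g t).
Proof. by move=> Hf Hg nz; apply: RF_mul => //; apply: RF_inv. Qed.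

Lemma RF_sum U (I : Type) (r : seq I) (Pd : pred I) (F : I -> T -> R) :
  (forall i, RF U (F i)) -> RF U (fun t => \sum_(i <- r | Pd i) F i t).
Proof.
move=> H; elim: r => [|x r IH].
  by apply: (RF_ext (g := fun _ => 0)) => [t _|]; [rewrite big_nil|exact: RF_const].
case Px: (Pd x).
  apply: (RF_ext (g := fun t => F x t + \sum_(i <- r | Pd i) F i t)) => [t _|].
    by rewrite big_cons Px.
  exact: RF_add.
by apply: (RF_ext (g := fun t => \sum_(i <- r | Pd i) F i t)) => // t _; rewrite big_cons Px.
Qed.

Lemma RF_prod U (I : Type) (r : seq I) (Pd : pred I) (F : I -> T -> R) :
  (forall i, RF U (F i)) -> RF U (fun t => \prod_(i <- r | Pd i) F i t).
Proof.
move=> H; elim: r => [|x r IH].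
  by apply: (RF_ext (g := fun _ => 1)) => [t _|]; [rewrite big_nil|exact: RF_const].
case Px: (Pd x).
  apply: (RF_ext (g := fun t => F x t * \prod_(i <- r | Pd i) F i t)) => [t _|].
    by rewrite big_cons Px.
  exact: RF_mul.
by apply: (RF_ext (g := fun t => \prod_(i <- r | Pd i) F i t)) => // t _; rewrite big_cons Px.
Qed.

Lemma RF_exp U f e : RF U f -> RF U (fun t => f t ^+ e).
Proof.
move=> H; elim: e => [|e IH].
  by apply: (RF_ext (g := fun _ => 1)) => [t _|]; [rewrite expr0|exact: RF_const].
by apply: (RF_ext (g := fun t => f t * f t ^+ e)) => [t _|]; [rewrite exprS|exact: RF_mul].
Qed.

Lemma Zs_RF U f : RF U f -> Zs U (fun t => f t = 0).
Proof.
move=> [a [b H]]; exists a => t Ut; have [nb ->] := H t Ut.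
split; last by move=> ->; rewrite mul0r.
by move/eqP; rewrite mulf_eq0 invr_eq0 (negbTE nb) orbF => /eqP.
Qed.

Lemma Zs_ext U C C' : (forall t, U t -> (C t <-> C' t)) -> Zs U C' -> Zs U C.
Proof.
move=> E [g H]; exists g => t Ut; rewrite -(H t Ut); exact: E.
Qed.

Lemma Zs_sub U V C : (forall t, V t -> U t) -> Zs U C -> Zs V C.
Proof. move=> S [g H]; exists g => t Vt; exact/H/S. Qed.

Lemma Zs_or U C1 C2 : Zs U C1 -> Zs (fun t => U t /\ ~ C1 t) C2 ->
  Zs U (fun t => C1 t \/ C2 t).
Proof.
move=> [g1 H1] [g2 H2]; exists (g1 * g2) => t Ut; rewrite mpoly.mevalM.
case: (boolp.pselect (C1 t)) => c1.
  have := (H1 t Ut).1 c1 => ->; rewrite mul0r; tauto.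
have n1 : ev t g1 != 0 by apply/eqP => /(H1 t Ut).2.
split.
  by case=> // c; rewrite ((H2 t (conj Ut c1)).1 c) mulr0.
by move/eqP; rewrite mulf_eq0 (negbTE n1) /= => /eqP ?; right; apply/(H2 t (conj Ut c1)).2.
Qed.

Lemma Zs_const U (C : Prop) : Zs U (fun _ => C).
Proof.
case: (boolp.pselect C) => c.
  by exists 0 => t _; rewrite mpoly.meval0; tauto.
by exists 1 => t _; rewrite mpoly.meval1; split => // /eqP; rewrite oner_eq0.
Qed.

Lemma Zs_exists U (I : finType) (C : I -> T -> Prop) :
  (forall i, Zs U (C i)) -> Zs U (fun t => exists i, C i t).
Proof.
move=> H; have [g Hg] := boolp.choice H.
exists (\prod_i g i) => t Ut.
rewrite (big_morph (mpoly.meval (pv t)) (@mpoly.mevalM _ _ (pv t)) (mpoly.meval1 _)).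
split.
  move=> [i Ci]; apply/eqP; rewrite prodf_seq_eq0; apply/hasP; exists i.
    by rewrite mem_index_enum.
  by rewrite /=; apply/eqP/(Hg i t Ut).1.
move/eqP; rewrite prodf_seq_eq0 => /hasP [i _ /= /eqP E].
by exists i; apply/(Hg i t Ut).2.
Qed.

Definition RFM U m n (A : T -> 'M[R]_(m, n)) := forall i j, RF U (fun t => A t i j).

Lemma RFM_ext U m n (A B : T -> 'M[R]_(m, n)) :
  (forall t, U t -> A t = B t) -> RFM U B -> RFM U A.
Proof. by move=> E H i j; apply: (RF_ext (g := fun t => B t i j)) => // t Ut; rewrite E. Qed.

Lemma RFM_sub U V m n (A : T -> 'M[R]_(m, n)) : (forall t, V t -> U t) -> RFM U A -> RFM V A.
Proof. by move=> S H i j; apply: RF_sub S _. Qed.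

Lemma RFM_matrix U m n (F : T -> 'I_m -> 'I_n -> R) :
  (forall i j, RF U (fun t => F t i j)) -> RFM U (fun t => \matrix_(i, j) F t i j).
Proof. by move=> H i j; apply: (RF_ext (g := fun t => F t i j)) => // t _; rewrite mxE. Qed.

Lemma RFM_const U m n (A : 'M[R]_(m, n)) : RFM U (fun _ => A).
Proof. by move=> i j; apply: RF_const. Qed.

Lemma RFM_add U m n (A B : T -> 'M[R]_(m, n)) : RFM U A -> RFM U B -> RFM U (fun t => A t + B t).
Proof.
move=> HA HB i j; apply: (RF_ext (g := fun t => A t i j + B t i j)) => [t _|]; first by rewrite mxE.
exact: RF_add.
Qed.

Lemma RFM_opp U m n (A : T -> 'M[R]_(m, n)) : RFM U A -> RFM U (fun t => - A t).
Proof.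
move=> HA i j; apply: (RF_ext (g := fun t => - A t i j)) => [t _|]; first by rewrite mxE.
exact: RF_opp.
Qed.

Lemma RFM_subr U m n (A B : T -> 'M[R]_(m, n)) : RFM U A -> RFM U B -> RFM U (fun t => A t - B t).
Proof. by move=> HA HB; apply: RFM_add => //; apply: RFM_opp. Qed.

Lemma RFM_mul U m n l (A : T -> 'M[R]_(m, n)) (B : T -> 'M[R]_(n, l)) :
  RFM U A -> RFM U B -> RFM U (fun t => A t *m B t).
Proof.
move=> HA HB i j; apply: (RF_ext (g := fun t => \sum_k A t i k * B t k j)) => [t _|]; first by rewrite mxE.
by apply: RF_sum => k; apply: RF_mul.
Qed.

Lemma RFM_tr U m n (A : T -> 'M[R]_(m, n)) : RFM U A -> RFM U (fun t => (A t)^T).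
Proof. by move=> HA i j; apply: (RF_ext (g := fun t => A t j i)) => // t _; rewrite mxE. Qed.

Lemma RFM_scale U m n (c : T -> R) (A : T -> 'M[R]_(m, n)) :
  RF U c -> RFM U A -> RFM U (fun t => c t *: A t).
Proof.
move=> Hc HA i j; apply: (RF_ext (g := fun t => c t * A t i j)) => [t _|]; first by rewrite mxE.
exact: RF_mul.
Qed.

Lemma RF_det U m (A : T -> 'M[R]_m) : RFM U A -> RF U (fun t => \det (A t)).
Proof.
move=> HA; rewrite /determinant; apply: RF_sum => s.
by apply: RF_mul; [apply: RF_const|apply: RF_prod => i; apply: HA].
Qed.

Lemma RFM_adj U m (A : T -> 'M[R]_m) : RFM U A -> RFM U (fun t => \adj (A t)).
Proof.
move=> HA i j; apply: (RF_ext (g := fun t => cofactor (A t) j i)) => [t _|]; first by rewrite mxE.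
rewrite /cofactor; apply: RF_mul; first exact: RF_const.
apply: RF_det => a b; apply: (RF_ext (g := fun t => A t (lift j a) (lift i b))) => [t _|].
  by rewrite !mxE.
exact: HA.
Qed.

Lemma RFM_inv U m (A : T -> 'M[R]_m) : RFM U A -> (forall t, U t -> A t \in unitmx) ->
  RFM U (fun t => invmx (A t)).
Proof.
move=> HA uA; apply: (RFM_ext (B := fun t => (\det (A t))^-1 *: \adj (A t))).
  by move=> t Ut; rewrite /invmx uA.
apply: RFM_scale; last exact: RFM_adj.
apply: RF_inv; first exact: RF_det.
by move=> t Ut; have := uA t Ut; rewrite unitmxE unitfE.
Qed.

Lemma RF_getm U m n (A : T -> 'M[R]_(m, n)) i j : RFM U A -> RF U (fun t => getm (A t) i j).
Proof.
move=> HA; rewrite /getm; case: (insub i) => [a|]; last exact: RF_const.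
case: (insub j) => [b|]; last exact: RF_const.
exact: HA.
Qed.

Lemma Zs_notunit U m (A : T -> 'M[R]_m) : RFM U A -> Zs U (fun t => A t \notin unitmx).
Proof.
move=> HA; apply: (Zs_ext (C' := fun t => \det (A t) = 0)).
  by move=> t _; rewrite unitmxE unitfE negbK; split => /eqP.
exact/Zs_RF/RF_det.
Qed.

End RF.

Section MB.
Variables (R : realType) (N : nat) (T : Type) (pv : T -> 'I_N -> R).
Local Notation RF := (RF pv).
Local Notation RFM := (RFM pv).
Local Notation Zs := (Zs pv).

Lemma RF_ifz U (b : bool) f : RF U f -> RF U (fun t => if b then f t else 0).
Proof. by case: b => // _; apply: RF_const. Qed.

Lemma RFM_Gammac U k m (Z : T -> 'M[R]_(k, m)) i : RFM U Z -> RFM U (fun t => Gammac (Z t) i).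
Proof.
move=> HZ; apply: RFM_matrix => a b; apply: RF_mul; first exact: RF_const.
by apply: RF_sum => j; apply: RF_mul; apply: RF_getm.
Qed.

Lemma Mbw_AM_None k n m (Z : 'M[R]_(k, m)) (om : 'cV[R]_k) (c1 c2 : R) (j : nat) :
  let rho := rhoh Z in
  let s2 := sig2h Z in
  let D := \sum_a om a 0 * (s2 a ^+ 2 / (1 - rho a) ^+ 4) in
  Mbw n (BW_AM om c1 c2 j) Z = None <->
  ((m.-1 = 0)%N \/ ((exists a : 'I_k, \sum_(0 <= t < m.-1) getm Z a t ^+ 2 = 0) \/
    ((exists a, 1 - rho a = 0) \/ ((j = 1%N /\ exists a, 1 + rho a = 0) \/ D = 0)))).
Proof.
move=> rho s2 D; rewrite /Mbw -/rho -/s2 -/D.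
case: ifP => H.
  split => // Hc; exfalso; move/and5P: H => [H1 /forallP H2 /forallP H3 H4 H5].
  case: Hc => [E|[[a E]|[[a E]|[[Ej [a E]]|E]]]].
  - by rewrite E in H1.
  - by move: (H2 a); rewrite E eqxx.
  - by move: (H3 a); rewrite E eqxx.
  - by move: H4; rewrite Ej eqxx /= => /forallP /(_ a); rewrite E eqxx.
  - by rewrite E eqxx in H5.
split => // _; move/negbT: H; rewrite !negb_and.
case/orP => [/negPn/eqP E|]; first by left.
case/orP => [|]; first by rewrite negb_forall => /existsP [a /negPn/eqP E]; right; left; exists a.
case/orP => [|]; first by rewrite negb_forall => /existsP [a /negPn/eqP E]; right; right; left; exists a.
case/orP => [|/negPn/eqP E]; last by do 4 right.
rewrite negb_imply => /andP [/eqP Ej]; rewrite negb_forall => /existsP [a /negPn/eqP E].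
by do 3 right; left; split => //; exists a.
Qed.

Lemma Zs_Mbw U k n m (bw : bwspec R k) (Z : T -> 'M[R]_(k, m)) :
  RFM U Z -> Zs U (fun t => Mbw n bw (Z t) = None).
Proof.
move=> HZ; case: bw => [om c1 c2 j|om w cb1 cb2 cb3|M0].
-
  pose ss t (a : 'I_k) := \sum_(0 <= s < m.-1) getm (Z t) a s ^+ 2.
  pose rho t := rhoh (Z t). pose s2 t := sig2h (Z t).
  pose D t := \sum_a om a 0 * (s2 t a ^+ 2 / (1 - rho t a) ^+ 4).
  apply: (Zs_ext (C' := fun t => (m.-1 = 0)%N \/ ((exists a, ss t a = 0) \/
    ((exists a, 1 - rho t a = 0) \/ ((j = 1%N /\ exists a, 1 + rho t a = 0) \/ D t = 0))))).
    by move=> t _; exact: Mbw_AM_None.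
  have Hss : forall V a, RFM V Z -> RF V (fun t => ss t a).
    by move=> V a HV; apply: RF_sum => s; apply: RF_exp; apply: RF_getm.
  apply: Zs_or; first exact: Zs_const.
  apply: Zs_or.
    by apply: Zs_exists => a; apply: Zs_RF; apply: Hss; apply: RFM_sub HZ => t [].
  set V1 := fun t => _ /\ _.
  have HV1 : RFM V1 Z by apply: RFM_sub HZ => t [[]].
  have nss : forall t, V1 t -> forall a, ss t a != 0.
    by move=> t [_ Hn] a; apply/eqP => E; apply: Hn; exists a.
  have Hrho : forall V a, (forall t, V t -> V1 t) -> RF V (fun t => rho t a).
    move=> V a S; apply: RF_div.
    - by apply: RF_sum => s; apply: RF_mul; apply: RF_getm; apply: RFM_sub HV1.
    - by apply: Hss; apply: RFM_sub HV1.
    - by move=> t Vt; apply: nss; apply: S.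
  apply: Zs_or.
    apply: Zs_exists => a; apply: Zs_RF; apply: RF_subr; first exact: RF_const.
    exact: Hrho.
  set V2 := fun t => _ /\ _.
  have n1 : forall t, V2 t -> forall a, 1 - rho t a != 0.
    by move=> t [_ Hn] a; apply/eqP => E; apply: Hn; exists a.
  have S21 : forall t, V2 t -> V1 t by move=> t [].
  apply: Zs_or.
    case: (eqVneq j 1%N) => [->|nj].
      apply: (Zs_ext (C' := fun t => exists a, 1 + rho t a = 0)); first by move=> t _; tauto.
      apply: Zs_exists => a; apply: Zs_RF; apply: RF_add; first exact: RF_const.
      exact: Hrho.
    apply: (Zs_ext (C' := fun _ => False)); last exact: Zs_const.
    by move=> t _; split => // [[/eqP E _]]; rewrite E in nj.
  apply: Zs_sub (fun t (H : _ /\ _) => H.1) _.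
  apply: Zs_RF; apply: RF_sum => a; apply: RF_mul; first exact: RF_const.
  apply: RF_div.
  - apply: RF_exp; apply: RF_mul; first exact: RF_const.
    apply: RF_sum => s; apply: RF_exp; apply: RF_subr; first apply: RF_getm.
      by apply: RFM_sub HV1 => t /S21.
    apply: RF_mul; first by apply: Hrho.
    by apply: RF_getm; apply: RFM_sub HV1 => t /S21.
  - by apply: RF_exp; apply: RF_subr; [exact: RF_const|exact: Hrho].
  - by move=> t Vt; apply: expf_neq0; apply: n1.
-
  apply: (Zs_ext (C' := fun t => symsum m (fun i => w i * (om^T *m Gammac (Z t) (absz i) *m om) 0 0) = 0)).
    by move=> t _; rewrite /Mbw; case: ifP => [/eqP|/negbT/negPn/eqP] H; split.
  apply: Zs_RF; rewrite /symsum; apply: RF_sum => i; apply: RF_add.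
    apply: RF_mul; first exact: RF_const.
    by apply: RFM_mul; [apply: RFM_mul; [exact: RFM_const|exact: RFM_Gammac]|exact: RFM_const].
  apply: RF_ifz; apply: RF_mul; first exact: RF_const.
  by apply: RFM_mul; [apply: RFM_mul; [exact: RFM_const|exact: RFM_Gammac]|exact: RFM_const].
-
  by apply: (Zs_ext (C' := fun _ => False)); [move=> t _ /=; split|exact: Zs_const].
Qed.
End MB.

Section P14.
Variable R : realType.

Lemma parts14 (n k q p : nat) (kappa : R -> R)
  (bw : bwspec R k) (X : 'M[R]_(n, k)) (Rm : 'M[R]_(q, k)) :
  (1 <= k)%N -> \rank X = k -> \rank Rm = q ->
  kernelA kappa -> bw_ok (n - p) bw -> (1 <= p)%N -> (p * (k + 1) <= n)%N ->
  (forall y : 'cV[R]_n,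
     (exists O, Omegah kappa bw p X Rm y = Some O /\ nnd O) <->
     Omegah kappa bw p X Rm y <> None) /\
  (forall y : 'cV[R]_n,
     (exists O, Omegah kappa bw p X Rm y = Some O /\ O \notin unitmx) <->
     (Omegah kappa bw p X Rm y <> None /\
      exists B, Bp p X Rm y = Some B /\ (\rank B < q)%N)) /\
  (forall y : 'cV[R]_n,
     Omegah kappa bw p X Rm y = Some 0 <->
     (Omegah kappa bw p X Rm y <> None /\ Bp p X Rm y = Some 0)) /\
  (forall y : 'cV[R]_n,
     Omegah kappa bw p X Rm y <> None ->
     (exists Z, Zhat p X y = Some Z /\ \rank Z = k) ->
     exists O, Omegah kappa bw p X Rm y = Some O /\ posdef O).
Proof.
move=> k1 rX rR kA bwok p1 pkn.
have np : (0 < n - p)%N.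
  rewrite subn_gt0; apply: (leq_trans _ pkn).
  by rewrite -{1}[p]muln1 ltn_pmul2l // addn1 ltnS.
have n0 : (0 < n)%N by apply: leq_trans np (leq_subr _ _).
have c0 : 0 < n%:R / (n - p)%:R :> R.
  by apply: divr_gt0; rewrite ltr0n.
have core : forall (y : 'cV[R]_n) (O : 'M[R]_q), Omegah kappa bw p X Rm y = Some O ->
   exists A, [/\ Ahat p X y = Some A, (1%:M - sumA A) \in unitmx,
     Bp p X Rm y = Some (Bof X Rm y A) &
     [/\ nnd O, (O \in unitmx) = row_free (Bof X Rm y A),
         (O = 0 <-> Bof X Rm y A = 0) & (row_free (Bof X Rm y A) -> posdef O)]].
  move=> y O E0; have [A [M [EA DU EM EO]]] := Omegah_rep E0; exists A.
  split => //; first exact: Omegah_Bp.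
  rewrite EO; apply: psd_core => //; apply: Kmx_posdef => //.
  exact: Mbw_ge0 bwok EM.
split; [|split; [|split]].
- move=> y; split; first by case=> Om [-> _].
  case E: (Omegah _ _ _ _ _ _) => [Om|] // _; exists Om; split => //.
  by have [A [_ _ _ []]] := core y Om E.
- move=> y; split.
    move=> [Om [E nU]]; split; first by rewrite E.
    have [A [_ _ EB [_ U _ _]]] := core y Om E.
    exists (Bof X Rm y A); split => //.
    by move: nU; rewrite U /row_free ltn_neqAle rank_leq_row andbT.
  case E: (Omegah _ _ _ _ _ _) => [Om|] [NN [B [EB rB]]]; last by case: NN.
  exists Om; split => //.
  have [A [_ _ EB' [_ U _ _]]] := core y Om E.
  by rewrite U; move: EB; rewrite EB' => [[->]]; rewrite /row_free neq_ltn rB.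
- move=> y; split.
    move=> E; split; first by rewrite E.
    have [A [_ _ EB [_ _ Z0 _]]] := core y 0 E.
    by rewrite EB; congr Some; apply/Z0.
  case E: (Omegah _ _ _ _ _ _) => [Om|] [NN EB]; last by case: NN.
  congr Some.
  have [A [_ _ EB' [_ _ Z0 _]]] := core y Om E.
  by apply/Z0; move: EB; rewrite EB' => [[]].
- move=> y; case E: (Omegah _ _ _ _ _ _) => [Om|] NN [Z [EZ rZ]]; last by case: NN.
  exists Om; split => //.
  have [A [EA DU _ [_ _ _ PD]]] := core y Om E.
  apply: PD; move: EZ; rewrite /Zhat EA /= => [[EZ]].
  rewrite /Bof EZ; apply/row_freePv => u.
  have fZ : row_free Z by rewrite /row_free rZ.
  move/eqP; rewrite mulmxA mulmx_free_eq0 // => /eqP.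
  rewrite mulmxA => /(congr1 (mulmx^~ (1%:M - sumA A))); rewrite mulmxKV // mul0mx.
  rewrite mulmxA; move/(congr1 (mulmx^~ (X^T *m X))); rewrite mulmxKV ?unit_XtX // mul0mx.
  by move/eqP; rewrite mulmx_free_eq0 ?/row_free ?rR // => /eqP.
Qed.
End P14.

Section P5.
Variables (R : realType) (n k q : nat).
Local Notation N := (n + n * k + q * k)%N.
Local Notation T := ('cV[R]_n * 'M[R]_(n, k) * 'M[R]_(q, k))%type.
Definition pvt (t : T) : 'I_N -> R := packv t.1.1 t.1.2 t.2.
Local Notation RF := (RF pvt).
Local Notation RFM := (RFM pvt).
Local Notation Zs := (Zs pvt).

Lemma coordRF U (c : 'I_N) : RF U (fun t => pvt t c).
Proof.
apply: (RF_ext (g := fun t => mpoly.meval (pvt t) (mpoly.mpolyX R (mpoly.mnm1 c)))).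
  by move=> t _; rewrite mpoly.mevalXU.
exact: RF_poly.
Qed.

Lemma RFM_y U : RFM U (fun t : T => t.1.1).
Proof.
move=> a j; have ha : (a < N)%N by rewrite -addnA; apply: leq_trans (ltn_ord a) (leq_addr _ _).
apply: (RF_ext (g := fun t => pvt t (Ordinal ha))); last exact: coordRF.
move=> t _; rewrite /pvt /packv /= ltn_ord.
by rewrite (ord1 j) -[0%N]/(nat_of_ord (0 : 'I_1)) getm_ord.
Qed.

Lemma RFM_X U : RFM U (fun t : T => t.1.2).
Proof.
move=> a b.
have kp : (0 < k)%N by apply: leq_ltn_trans (ltn_ord b).
have hab : (a * k + b < n * k)%N.
  apply: (@leq_trans (a * k + k)); first by rewrite ltn_add2l.
  by rewrite -mulSnr leq_mul2r ltn_ord orbT.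
have hc : (n + (a * k + b) < N)%N by rewrite -addnA ltn_add2l ltn_addr.
apply: (RF_ext (g := fun t => pvt t (Ordinal hc))); last exact: coordRF.
have h1 : (n + (a * k + b) < n)%N = false by rewrite ltnNge leq_addr.
have h2 : (n + (a * k + b) < n + n * k)%N by rewrite ltn_add2l.
move=> t _; rewrite /pvt /packv /= h1 h2 addKn.
by rewrite divnMDl // modnMDl divn_small // addn0 modn_small // getm_ord.
Qed.

Lemma RFM_Rm U : RFM U (fun t : T => t.2).
Proof.
move=> a b.
have kp : (0 < k)%N by apply: leq_ltn_trans (ltn_ord b).
have hab : (a * k + b < q * k)%N.
  apply: (@leq_trans (a * k + k)); first by rewrite ltn_add2l.
  by rewrite -mulSnr leq_mul2r ltn_ord orbT.
have hc : (n + n * k + (a * k + b) < N)%N by rewrite ltn_add2l.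
apply: (RF_ext (g := fun t => pvt t (Ordinal hc))); last exact: coordRF.
have h1 : (n + n * k + (a * k + b) < n)%N = false by rewrite ltnNge -addnA leq_addr.
have h2 : (n + n * k + (a * k + b) < n + n * k)%N = false by rewrite ltnNge leq_addr.
have h3 : (n + n * k + (a * k + b) - n - n * k = a * k + b)%N by rewrite -addnA addKn addKn.
move=> t _; rewrite /pvt /packv /= h1 h2 h3.
by rewrite divnMDl // modnMDl divn_small // addn0 modn_small // getm_ord.
Qed.
End P5.

Section P5b.
Variables (R : realType) (n k q p : nat).
Local Notation N := (n + n * k + q * k)%N.
Local Notation T := ('cV[R]_n * 'M[R]_(n, k) * 'M[R]_(q, k))%type.
Local Notation RF := (RF (@pvt R n k q)).
Local Notation RFM := (RFM (@pvt R n k q)).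
Local Notation Zs := (Zs (@pvt R n k q)).

Definition Sf (t : T) := V1 p t.1.2 t.1.1 *m (V1 p t.1.2 t.1.1)^T.
Definition Af (t : T) := Vp p t.1.2 t.1.1 *m (V1 p t.1.2 t.1.1)^T *m invmx (Sf t).
Definition Zf (t : T) := Vp p t.1.2 t.1.1 - Af t *m V1 p t.1.2 t.1.1.
Definition Df (t : T) := (1%:M : 'M[R]_k) - sumA (Af t).
Definition Bf (t : T) := Bof t.1.2 t.2 t.1.1 (Af t).

Lemma inNstar_iff (kappa : R -> R) (bw : bwspec R k) (t : T) :
  kernelA kappa -> bw_ok (n - p) bw -> (0 < n - p)%N ->
  inNstar kappa bw p t.1.2 t.2 t.1.1 <->
  (Sf t \notin unitmx \/ (Df t \notin unitmx \/
     (Mbw n bw (Zf t) = None \/ Bf t *m (Bf t)^T \notin unitmx))).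
Proof.
move=> kA bwok np; rewrite /inNstar.
case E: (Omegah _ _ _ _ _ _) => [Om|].
  have [A [M [EA DU EM EO]]] := Omegah_rep E.
  have HS : Sf t \in unitmx by move: EA; rewrite /Ahat; case: ifP.
  have EAf : A = Af t by move: EA; rewrite /Ahat HS => [[]].
  subst A.
  have n0 : (0 < n)%N by apply: leq_trans np (leq_subr _ _).
  have c0 : 0 < n%:R / (n - p)%:R :> R by apply: divr_gt0; rewrite ltr0n.
  have [_ U _ _] := psd_core (Bof t.1.2 t.2 t.1.1 (Af t)) c0
     (@Kmx_posdef _ _ _ (n - p) kA (Mbw_ge0 bwok EM)).
  split.
    case=> // [[Om' [[<-] nU]]]; do 3 right; by rewrite /Bf unit_mxtr -U -EO.
  case=> [|[|[|nU]]].
  - by rewrite HS.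
  - by rewrite /Df DU.
  - by rewrite /Zf EM.
  - by right; exists Om; split => //; rewrite EO U; move: nU; rewrite /Bf unit_mxtr.
split => _; last by left.
move: E; rewrite /Omegah /Ahat /=.
case: (boolp.pselect (Sf t \in unitmx)) => HS; last by move=> _; left; apply/negP.
rewrite /Sf in HS; rewrite HS.
case: (boolp.pselect (Df t \in unitmx)) => HD; last by move=> _; right; left; apply/negP.
rewrite /Df /Af /Sf in HD; rewrite HD.
by case EM: (Mbw _ _ _) => [M|] // _; right; right; left; rewrite /Zf /Af /Sf.
Qed.
End P5b.

Section P5c.
Variables (R : realType) (n k q p : nat).
Local Notation N := (n + n * k + q * k)%N.
Local Notation T := ('cV[R]_n * 'M[R]_(n, k) * 'M[R]_(q, k))%type.
Local Notation RF := (RF (@pvt R n k q)).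
Local Notation RFM := (RFM (@pvt R n k q)).
Local Notation Zs := (Zs (@pvt R n k q)).

Definition U0 (t : T) := (t.1.2)^T *m t.1.2 \in unitmx.

Lemma RFM_diag U m (d : T -> 'rV[R]_m) : RFM U d -> RFM U (fun t => diag_mx (d t)).
Proof.
move=> H i j; apply: (RF_ext (g := fun t => if i == j then d t 0 i else 0)).
  by move=> t _; rewrite mxE; case: (i == j); rewrite ?mulr1n ?mulr0n.
by apply: RF_ifz; apply: H.
Qed.

Lemma RFM_XXi U : (forall t, U t -> U0 t) -> RFM U (fun t : T => invmx ((t.1.2)^T *m t.1.2)).
Proof.
move=> S; apply: RFM_inv => //; apply: RFM_mul; [apply: RFM_tr|]; exact: RFM_X.
Qed.

Lemma RFM_Vhat U : (forall t, U t -> U0 t) -> RFM U (fun t : T => Vhat t.1.2 t.1.1).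
Proof.
move=> S; rewrite /Vhat /uhat; apply: RFM_mul; first by apply: RFM_tr; exact: RFM_X.
apply: RFM_diag; apply: RFM_tr; apply: RFM_subr; first exact: RFM_y.
apply: RFM_mul; first exact: RFM_X.
apply: RFM_mul; last exact: RFM_y.
by apply: RFM_mul; [exact: RFM_XXi|apply: RFM_tr; exact: RFM_X].
Qed.

Lemma RFM_Vp U : (forall t, U t -> U0 t) -> RFM U (fun t : T => Vp p t.1.2 t.1.1).
Proof. by move=> S; apply: RFM_matrix => a j; apply: RF_getm; exact: RFM_Vhat. Qed.

Lemma RFM_V1 U : (forall t, U t -> U0 t) -> RFM U (fun t : T => V1 p t.1.2 t.1.1).
Proof. by move=> S; apply: RFM_matrix => a j; apply: RF_getm; exact: RFM_Vhat. Qed.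

Definition U1 (t : T) := U0 t /\ Sf p t \in unitmx.

Lemma RFM_Af U : (forall t, U t -> U1 t) -> RFM U (@Af R n k q p).
Proof.
move=> S; have S0 : forall t, U t -> U0 t by move=> t /S [].
rewrite /Af; apply: RFM_mul.
  by apply: RFM_mul; [exact: RFM_Vp|apply: RFM_tr; exact: RFM_V1].
apply: RFM_inv; last by move=> t /S [].
by apply: RFM_mul; [exact: RFM_V1|apply: RFM_tr; exact: RFM_V1].
Qed.

Lemma RFM_Zf U : (forall t, U t -> U1 t) -> RFM U (@Zf R n k q p).
Proof.
move=> S; have S0 : forall t, U t -> U0 t by move=> t /S [].
rewrite /Zf; apply: RFM_subr; first exact: RFM_Vp.
by apply: RFM_mul; [exact: RFM_Af|exact: RFM_V1].
Qed.

Lemma RFM_Df U : (forall t, U t -> U1 t) -> RFM U (@Df R n k q p).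
Proof.
move=> S; rewrite /Df /sumA; apply: RFM_subr; first exact: RFM_const.
move=> i j; apply: (RF_ext (g := fun t => \sum_(l < p) getm (Af p t) i (l * k + j))).
  by move=> t _; rewrite summxE; apply: eq_bigr => l _; rewrite mxE.
by apply: RF_sum => l; apply: RF_getm; exact: RFM_Af.
Qed.

Definition U2 (t : T) := U1 t /\ Df p t \in unitmx.

Lemma RFM_Bf U : (forall t, U t -> U2 t) -> RFM U (@Bf R n k q p).
Proof.
move=> S; have S1 : forall t, U t -> U1 t by move=> t /S [].
have S0 : forall t, U t -> U0 t by move=> t /S1 [].
rewrite /Bf /Bof; apply: RFM_mul; last exact: RFM_Zf.
apply: RFM_mul; last by apply: RFM_inv; [exact: RFM_Df|move=> t /S []].
by apply: RFM_mul; [exact: RFM_Rm|exact: RFM_XXi].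
Qed.

Lemma Zs_chain (bw : bwspec R k) :
  Zs U0 (fun t => Sf p t \notin unitmx \/ (Df p t \notin unitmx \/
     (Mbw n bw (Zf p t) = None \/ Bf p t *m (Bf p t)^T \notin unitmx))).
Proof.
apply: Zs_or.
  by apply: Zs_notunit; apply: RFM_mul; [exact: RFM_V1|apply: RFM_tr; exact: RFM_V1].
have S1 : forall t, U0 t /\ ~ (Sf p t \notin unitmx) -> U1 t.
  by move=> t [H0 H]; split => //; apply/negPn/negP.
apply: Zs_or; first by apply: Zs_notunit; exact: RFM_Df.
have S2 : forall t, (U0 t /\ ~ (Sf p t \notin unitmx)) /\ ~ (Df p t \notin unitmx) -> U2 t.
  by move=> t [H0 H]; split; [exact: S1|apply/negPn/negP].
apply: Zs_or; first by apply: Zs_Mbw; apply: RFM_Zf => t /S2 [].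
apply: Zs_notunit; apply: RFM_mul; [|apply: RFM_tr]; apply: RFM_Bf => t [H _]; exact: S2.
Qed.
End P5c.

Lemma part5 (R : realType) (n k q p : nat) (kappa : R -> R) (bw : bwspec R k) :
  kernelA kappa -> bw_ok (n - p) bw -> (0 < n - p)%N ->
  exists g : mpoly.mpoly (n + n * k + q * k) R,
     forall (X' : 'M[R]_(n, k)) (Rm' : 'M[R]_(q, k)),
       \rank X' = k -> \rank Rm' = q ->
       forall y : 'cV[R]_n,
         inNstar kappa bw p X' Rm' y <-> mpoly.meval (packv y X' Rm') g = 0.
Proof.
move=> kA bwok np.
have [g Hg] := @Zs_chain R n k q p bw.
exists g => X' Rm' rX rR y.
have := Hg (y, X', Rm') (unit_XtX rX); rewrite /pvt /= => <-.
exact: (@inNstar_iff R n k q p kappa bw (y, X', Rm') kA bwok np).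
Qed.

Theorem lemma3p2 (R : realType) (n k q p : nat) (kappa : R -> R)
  (bw : bwspec R k) (X : 'M[R]_(n, k)) (Rm : 'M[R]_(q, k)) (r : 'cV[R]_q) :
  (2 < n)%N -> (1 <= k)%N -> (k < n)%N -> \rank X = k ->
  (1 <= q)%N -> \rank Rm = q ->
  kernelA kappa -> bw_ok (n - p) bw -> (1 <= p)%N -> (p * (k + 1) <= n)%N ->
  (* 1 *)
  (forall y : 'cV[R]_n,
     (exists O, Omegah kappa bw p X Rm y = Some O /\ nnd O) <->
     Omegah kappa bw p X Rm y <> None) /\
  (* 2 *)
  (forall y : 'cV[R]_n,
     (exists O, Omegah kappa bw p X Rm y = Some O /\ O \notin unitmx) <->
     (Omegah kappa bw p X Rm y <> None /\
      exists B, Bp p X Rm y = Some B /\ (\rank B < q)%N)) /\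
  (* 3 *)
  (forall y : 'cV[R]_n,
     Omegah kappa bw p X Rm y = Some 0 <->
     (Omegah kappa bw p X Rm y <> None /\ Bp p X Rm y = Some 0)) /\
  (* 4 *)
  (forall y : 'cV[R]_n,
     Omegah kappa bw p X Rm y <> None ->
     (exists Z, Zhat p X y = Some Z /\ \rank Z = k) ->
     exists O, Omegah kappa bw p X Rm y = Some O /\ posdef O) /\
  (* 5 *)
  (exists g : mpoly.mpoly (n + n * k + q * k) R,
     forall (X' : 'M[R]_(n, k)) (Rm' : 'M[R]_(q, k)),
       \rank X' = k -> \rank Rm' = q ->
       forall y : 'cV[R]_n,
         inNstar kappa bw p X' Rm' y <-> mpoly.meval (packv y X' Rm') g = 0).
Proof.
move=> n2 k1 kn rX q1 rR kA bwok p1 pkn.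
have np : (0 < n - p)%N.
  rewrite subn_gt0; apply: (leq_trans _ pkn).
  by rewrite -{1}[p]muln1 ltn_pmul2l // addn1 ltnS.
have [H1 [H2 [H3 H4]]] := parts14 k1 rX rR kA bwok p1 pkn.
do 4 (split => //).
exact: part5.
Qed.
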